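(* Let $X$ and $Y$ be uncertain variables on a common set $\Omega$ with finite ranges. Then $$I_\star(X;Y)\;=\;\sup_{g}\ \mathcal{L}(g\circ X\rightarrow Y)\;\leq\; \mathcal{L}_\star(X\rightarrow Y),$$ where the supremum ranges over all finite sets $\mathcal{U}$ and all functions $g:[\![X]\!]\to\mathcal{U}$ such that $|[\![g\circ X\mid Y(\omega)=y]\!]|=|\{g(x):x\in[\![X\mid Y(\omega)=y]\!]\}|=1$ for every $y\in[\![Y]\!]$.
   Context: Let $\Omega$ be a set. An uncertain variable (uv) is a map $X:\Omega\to\mathbb{X}$ into some set; all uvs considered have finite ranges. The range of $X$ is $[\![X]\!]:=\{X(\omega):\omega\in\Omega\}$; the conditional range is $[\![X\mid Y(\omega)=y]\!]:=\{X(\omega):\omega\in\Omega,\ Y(\omega)=y\}$. Two points $x,x'\in[\![X]\!]$ are overlap connected if there is a finite sequence $y_1,\dots,y_n\in[\![Y]\!]$ with $x\in[\![X\mid Y(\omega)=y_1]\!]$, $x'\in[\![X\mid Y(\omega)=y_n]\!]$ and $[\![X\mid Y(\omega)=y_i]\!]\cap[\![X\mid Y(\omega)=y_{i+1}]\!]\neq\emptyset$ for $i=1,\dots,n-1$. The overlap partition $[\![X\mid Y]\!]_\star$ is the (unique) partition of $[\![X]\!]$ into the equivalence classes of this relation (each class is overlap connected and points in different classes are not overlap connected). The maximin information is $I_\star(X;Y):=\log_2|[\![X\mid Y]\!]_\star|$. The non-stochastic brute-force guessing leakage from a uv $U$ to a uv $Y$ is $$\mathcal{L}(U\rightarrow Y):=\log_2\left(\frac{|[\![U]\!]|}{\min_{y\in[\![Y]\!]}|[\![U\mid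 Y(\omega)=y]\!]|}\right).$$ The maximal non-stochastic brute-force leakage from $X$ to $Y$ is $$\mathcal{L}_\star(X\rightarrow Y):=\sup_{g}\ \mathcal{L}(g\circ X\rightarrow Y),$$ where the supremum ranges over all finite sets $\mathcal{U}$ and all functions $g:[\![X]\!]\to\mathcal{U}$. *)

(* Defs.v *)
From HB Require Import structures.
From mathcomp Require Import all_boot all_order all_algebra.
From mathcomp Require Import all_classical all_reals all_analysis.
Set Implicit Arguments. Unset Strict Implicit. Unset Printing Implicit Defensive.
Import Order.TTheory GRing.Theory Num.Theory.

Local Open Scope ring_scope.

(* Uncertain variables: maps X : Omega -> TX into a finite type TX
   (so the range is finite). *)

Definition urange (Omega : Type) (TX : finType) (X : Omega -> TX) : {set TX} :=
  [set x | `[< exists w, X w = x >] ].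

Definition ucond (Omega : Type) (TX TY : finType) (X : Omega -> TX)
  (Y : Omega -> TY) (y : TY) : {set TX} :=
  [set x | `[< exists w, Y w = y /\ X w = x >] ].

Definition overlap_connected (Omega : Type) (TX TY : finType)
  (X : Omega -> TX) (Y : Omega -> TY) (x x' : TX) : Prop :=
  exists (y1 : TY) (s : seq TY),
    all (fun y => y \in urange Y) (y1 :: s) /\
    x \in ucond X Y y1 /\ x' \in ucond X Y (last y1 s) /\
    path (fun a b => ucond X Y a :&: ucond X Y b != finset.set0) y1 s.

Definition overlap_partition (Omega : Type) (TX TY : finType)
  (X : Omega -> TX) (Y : Omega -> TY) : {set {set TX}} :=
  [set [set x' in urange X | `[< overlap_connected X Y x x' >] ]
    | x in urange X].

Definition log2 {R : realType} (r : R) : R := ln r / ln 2.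

Definition maximin_info {R : realType} (Omega : Type) (TX TY : finType)
  (X : Omega -> TX) (Y : Omega -> TY) : R :=
  log2 (#|overlap_partition X Y|%:R).

(* min_{y in [[Y]]} |[[U | Y = y]]|.  The fold starts from |[[U]]|, which is
   >= every |[[U|Y=y]]|, so for nonempty [[Y]] this is exactly the minimum. *)
Definition min_cond_card (Omega : Type) (TU TY : finType)
  (U : Omega -> TU) (Y : Omega -> TY) : nat :=
  \big[minn/#|urange U|]_(y in urange Y) #|ucond U Y y|.

Definition bf_leakage {R : realType} (Omega : Type) (TU TY : finType)
  (U : Omega -> TU) (Y : Omega -> TY) : R :=
  log2 (#|urange U|%:R / (min_cond_card U Y)%:R).

Local Open Scope classical_set_scope.
Local Open Scope ereal_scope.

(* maximal non-stochastic brute-force leakage L_*(X -> Y):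
   sup over all finite sets U and functions g (values of g outside [[X]]
   are irrelevant). *)
Definition max_bf_leakage {R : realType} (Omega : Type) (TX TY : finType)
  (X : Omega -> TX) (Y : Omega -> TY) : \bar R :=
  ereal_sup [set r | exists (TU : finType) (g : TX -> TU),
                       r = (bf_leakage (g \o X) Y)%:E].

(* Main.v *)
Require Import Defs.
From HB Require Import structures.
From mathcomp Require Import all_boot all_order all_algebra.
From mathcomp Require Import all_classical all_reals all_analysis.
Import Order.TTheory GRing.Theory Num.Theory.

Section Helpers.
Set Implicit Arguments.
Local Open Scope ring_scope.
Variables (R : realType) (Omega : Type) (TX TY : finType)
  (X : Omega -> TX) (Y : Omega -> TY).

Lemma log2_le (m n : nat) : (m <= n)%N -> log2 (m%:R : R) <= log2 (n%:R : R).
Proof.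
move=> mn; rewrite /log2; apply: ler_wpM2r.
  by rewrite invr_ge0 ln_ge0 // ler1n.
case: m mn => [|m] mn.
  rewrite ln0 //; case: n mn => [|n] _; first by rewrite ln0.
  by rewrite ln_ge0 // ler1n.
have n0 : (0 < n)%N by apply: leq_trans mn.
by rewrite ler_ln ?posrE ?ltr0n // ler_nat.
Qed.

Lemma in_urange (T : finType) (U : Omega -> T) x :
  (x \in urange U) <-> exists w, U w = x.
Proof. by rewrite /urange inE; split => /asboolP. Qed.

Lemma in_ucond (T : finType) (U : Omega -> T) y x :
  (x \in ucond U Y y) <-> exists w, Y w = y /\ U w = x.
Proof. by rewrite /ucond inE; split => /asboolP. Qed.

Definition oc := overlap_connected X Y.
Definition cls (x : TX) : {set TX} := [set x' in urange X | `[< oc x x' >] ].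

Lemma oc_refl w : oc (X w) (X w).
Proof.
exists (Y w), [::]; split; [|split; [|split; [|by []]]].
  have hY : Y w \in urange Y by apply/in_urange; exists w.
  by rewrite /= hY.
all: by apply/in_ucond; exists w.
Qed.

Lemma oc_shift y a b z : a \in ucond X Y y -> b \in ucond X Y y ->
  oc a z -> oc b z.
Proof.
move=> ha hb [y1 [s [Hall [H1 [H2 Hp]]]]].
exists y, (y1 :: s); split; [|split; [exact: hb|split; [exact: H2|]]].
  have hy : y \in urange Y.
    by move/in_ucond: ha => [w [<- _]]; apply/in_urange; exists w.
  by rewrite /= hy; exact: Hall.
have he : ucond X Y y :&: ucond X Y y1 != finset.set0.
  by apply/set0Pn; exists a; rewrite inE ha H1.
by rewrite /= he; exact: Hp.
Qed.

Lemma cls_eq y a b : a \in ucond X Y y -> b \in ucond X Y y -> cls a = cls b.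
Proof.
move=> ha hb; apply/setP => z; rewrite !inE.
case: (`[< exists w : Omega, X w = z >]) => //=.
apply/asboolP/asboolP; [exact: oc_shift ha hb | exact: oc_shift hb ha].
Qed.

Section G.
Variables (TU : finType) (g : TX -> TU).
Hypothesis H : forall y, y \in urange Y -> #|ucond (g \o X) Y y| = 1%N.

Lemma g_const y a b : a \in ucond X Y y -> b \in ucond X Y y -> g a = g b.
Proof.
move=> ha hb.
have hy : y \in urange Y.
  by move/in_ucond: ha => [w [<- _]]; apply/in_urange; exists w.
have /eqP/cards1P [u Hu] := H hy.
have : g a \in ucond (g \o X) Y y.
  by move/in_ucond: ha => [w [? ?]]; apply/in_ucond; exists w; subst.
have : g b \in ucond (g \o X) Y y.
  by move/in_ucond: hb => [w [? ?]]; apply/in_ucond; exists w; subst.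
by rewrite Hu !inE => /eqP -> /eqP ->.
Qed.

Lemma g_oc a b : oc a b -> g a = g b.
Proof.
move=> [y1 [s [Hall [H1 [H2 Hp]]]]].
elim: s y1 a Hall H1 H2 Hp => [|y2 s IH] y1 a Hall H1 H2 Hp /=.
  exact: g_const H1 H2.
move: Hp => /= /andP [/set0Pn [z]]; rewrite inE => /andP [hz1 hz2] Hp.
rewrite (g_const H1 hz1); apply: (IH y2) => //.
by move: Hall => /= /andP [_].
Qed.

Lemma card_le : (#|urange (g \o X)| <= #|overlap_partition X Y|)%N.
Proof.
pose h (C : {set TX}) : option TU := if [pick x in C] is Some x then Some (g x) else None.
rewrite -(card_imset _ (@Some_inj _)).
apply: (@leq_trans #|h @: overlap_partition X Y|); last exact: leq_imset_card.
apply: subset_leq_card. apply/fintype.subsetP => oz /imsetP [z /in_urange [w <-] ->].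
apply/imsetP; exists (cls (X w)).
  apply/imsetP; exists (X w) => //; by apply/in_urange; exists w.
have hin : X w \in cls (X w).
  rewrite inE; apply/andP; split; first by apply/in_urange; exists w.
  by apply/asboolP; apply: oc_refl.
rewrite /h; case: pickP => [x hx | /(_ (X w))]; last by rewrite hin.
congr Some; apply: g_oc.
by move: hx; rewrite inE => /andP [_ /asboolP].
Qed.

Lemma bf_eq : bf_leakage (g \o X) Y = log2 ((#|urange (g \o X)|)%:R : R).
Proof.
rewrite /bf_leakage /min_cond_card.
case: (pselect (exists w : Omega, True)) => [[w _]|nw].
  have -> : (\big[minn/#|urange (g \o X)|]_(y in urange Y)
              #|ucond (g \o X) Y y|) = 1%N.
    rewrite (eq_bigr (fun _ => 1%N)); last by move=> y hy; exact: H hy.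
    have hy : Y w \in urange Y by apply/in_urange; exists w.
    have h1 : (0 < #|urange (g \o X)|)%N.
      by apply/card_gt0P; exists (g (X w)); apply/in_urange; exists w.
    rewrite big_const.
    have : (0 < #|urange Y|)%N by apply/card_gt0P; exists (Y w).
    case: #|urange Y| => // n _ /=.
    elim: n => [|n IH] /=; first by apply/minn_idPl.
    by rewrite IH.
  by rewrite divr1.
have -> : #|urange (g \o X)| = 0%N.
  apply/eqP; rewrite cards_eq0; apply/eqP; apply/setP => z; rewrite [RHS]inE; apply/negP => /in_urange [w _]; apply: nw; by exists w.
by rewrite mul0r.
Qed.
End G.

Lemma cls_H y : y \in urange Y -> #|ucond (cls \o X) Y y| = 1%N.
Proof.
move=> /in_urange [w0 hw0]; apply/eqP/cards1P; exists (cls (X w0)).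
apply/setP => z; rewrite inE; apply/idP/eqP.
  move=> /in_ucond [w [hw <-]] /=; apply: (cls_eq (y := y)); apply/in_ucond.
    by exists w.
  by exists w0.
by move=> ->; apply/in_ucond; exists w0.
Qed.

Lemma cls_range : urange (cls \o X) = overlap_partition X Y.
Proof.
apply/setP => z; apply/idP/idP.
  move=> /in_urange [w <-]; apply/imsetP; exists (X w) => //.
  by apply/in_urange; exists w.
move=> /imsetP [x /in_urange [w <-] ->]; by apply/in_urange; exists w.
Qed.
End Helpers.

Local Open Scope classical_set_scope.
Local Open Scope ereal_scope.

Theorem proposition5 (R : realType) (Omega : Type) (TX TY : finType)
  (X : Omega -> TX) (Y : Omega -> TY) :
  let S := [set r : \bar R | exists (TU : finType) (g : TX -> TU),
              (forall y, y \in urange Y -> #|ucond (g \o X) Y y| = 1%N) /\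
              r = (bf_leakage (g \o X) Y)%:E] in
  (maximin_info X Y : R)%:E = ereal_sup S /\
  ereal_sup S <= max_bf_leakage X Y.
Proof.
have HC := @cls_H Omega TX TY X Y.
move=> S; split.
  apply/eqP. rewrite eq_le. apply/andP; split.
    apply: ereal_sup_ubound. exists {set TX}, (@cls Omega TX TY X Y); split.
      exact: HC.
    rewrite (@bf_eq R Omega TX TY X Y _ _ HC). rewrite (@cls_range Omega TX TY X Y).
rewrite /maximin_info. reflexivity.
  apply: ge_ereal_sup => r [TU [g [Hg ->]]].
  rewrite lee_fin (@bf_eq R Omega TX TY X Y _ _ Hg) /maximin_info.
  apply: log2_le; exact: (@card_le Omega TX TY X Y _ _ Hg).
apply: ereal_sup_le => r [TU [g [Hg ->]]]; by exists TU, g.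
Qed.
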